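(* Let $\varphi(z_1,\dots,z_h)$ be a homogeneous cubic polynomial with real coefficients, and for $z\in\mathbb{C}^h$ let $\omega(z)=-\varphi(z)e_0+\sum_{i=1}^h\frac{\partial\varphi}{\partial z_i}e_i+\sum_{i=1}^hz_if_i+f_0$ in $\mathbb{C}^{2h+2}$ with real symplectic basis $e_0,\dots,e_h,f_1,\dots,f_h,f_0$. Define the filtration $F^3=\mathbb{C}\omega(z)$, $F^2=\operatorname{span}\{\omega,\partial\omega/\partial z_1,\dots,\partial\omega/\partial z_h\}$, $F^1=(F^3)^\perp$, $F^0=\mathbb{C}^{2h+2}$. Write $y=(\operatorname{Im}z_1,\dots,\operatorname{Im}z_h)\in\mathbb{R}^h$. Then the set of $z\in\mathbb{C}^h$ at which the Hodge–Riemann bilinear relations hold, namely $\sqrt{-1}\langle\omega,\bar\omega\rangle>0$ and the Hermitian form $\psi\mapsto\sqrt{-1}\langle\psi,\bar\psi\rangle$ is negative definite on $V^{2,1}=\{\psi\in F^2:\langle\psi,\bar\omega\rangle=0\}$, equals the set of $z$ such that $\varphi(y)<0$ and the real symmetric matrix $\bigl(\frac{\partial^2\varphi}{\partial z_i\partial z_j}(y)\bigr)$ has signature $(h-1,1)$ (i.e. $h-1$ positive and one negative eigenvalue).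
   Context: Symplectic basis: $\langle e_i,e_j\rangle=\langle f_i,f_j\rangle=0$, $\langle e_i,f_j\rangle=\delta_{ij}$; complex conjugation is with respect to the real structure in which all $e_i,f_i$ are real. *)

(* Defs.v *)
From HB Require Import structures.
From mathcomp Require Import all_boot all_order all_algebra.
Set Implicit Arguments. Unset Strict Implicit. Unset Printing Implicit Defensive.
Import Order.TTheory GRing.Theory Num.Theory.
Local Open Scope ring_scope.

(* A homogeneous cubic form in h variables is represented by its coefficient
   tensor c : phi(z) = sum_{i,j,k} c i j k * z_i z_j z_k (c need not be symmetric). *)
Definition cubic (C : numClosedFieldType) (h : nat)
  (c : 'I_h -> 'I_h -> 'I_h -> C) (z : 'rV[C]_h) : C :=
  \sum_(i < h) \sum_(j < h) \sum_(k < h) c i j k * z 0 i * z 0 j * z 0 k.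

Definition dcubic (C : numClosedFieldType) (h : nat)
  (c : 'I_h -> 'I_h -> 'I_h -> C) (z : 'rV[C]_h) (i : 'I_h) : C :=
  \sum_(j < h) \sum_(k < h) (c i j k + c j i k + c j k i) * z 0 j * z 0 k.

Definition d2cubic (C : numClosedFieldType) (h : nat)
  (c : 'I_h -> 'I_h -> 'I_h -> C) (z : 'rV[C]_h) (i j : 'I_h) : C :=
  \sum_(k < h) (c i j k + c i k j + c j i k + c k i j + c j k i + c k j i) * z 0 k.

Definition hessian (C : numClosedFieldType) (h : nat)
  (c : 'I_h -> 'I_h -> 'I_h -> C) (z : 'rV[C]_h) : 'M[C]_h :=
  \matrix_(i, j) d2cubic c z i j.

(* Vectors of C^{2h+2}: a 2 x (h+1) matrix; row 0 holds the coordinates on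
   e_0,...,e_h, row 1 the coordinates on f_0,...,f_h (column 0 = index 0). *)
Definition sympvec (C : numClosedFieldType) (h : nat) := 'M[C]_(2, h.+1).

(* symplectic form: <e_i,f_j> = delta_ij = - <f_j,e_i>, <e,e> = <f,f> = 0 *)
Definition sform (C : numClosedFieldType) (h : nat) (u v : sympvec C h) : C :=
  \sum_(i < h.+1) (u 0 i * v 1 i - u 1 i * v 0 i).

(* complex conjugation w.r.t. the real structure in which the e_i, f_i are real *)
Definition vconj (C : numClosedFieldType) (h : nat) (u : sympvec C h) : sympvec C h :=
  map_mx (fun x => x^*) u.

Definition omega (C : numClosedFieldType) (h : nat)
  (c : 'I_h -> 'I_h -> 'I_h -> C) (z : 'rV[C]_h) : sympvec C h :=
  \matrix_(r < 2, a < h.+1)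
    if r == 0 then
      (if unlift ord0 a is Some i then dcubic c z i else - cubic c z)
    else
      (if unlift ord0 a is Some i then z 0 i else 1).

Definition domega (C : numClosedFieldType) (h : nat)
  (c : 'I_h -> 'I_h -> 'I_h -> C) (z : 'rV[C]_h) (j : 'I_h) : sympvec C h :=
  \matrix_(r < 2, a < h.+1)
    if r == 0 then
      (if unlift ord0 a is Some i then d2cubic c z i j else - dcubic c z j)
    else
      (if unlift ord0 a is Some i then (i == j)%:R else 0).

Definition inF2 (C : numClosedFieldType) (h : nat)
  (c : 'I_h -> 'I_h -> 'I_h -> C) (z : 'rV[C]_h) (psi : sympvec C h) : Prop :=
  exists (a0 : C) (a : 'I_h -> C),
    psi = a0 *: omega c z + \sum_(j < h) a j *: domega c z j.

Definition HodgeRiemann (C : numClosedFieldType) (h : nat)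
  (c : 'I_h -> 'I_h -> 'I_h -> C) (z : 'rV[C]_h) : Prop :=
  0 < 'i * sform (omega c z) (vconj (omega c z)) /\
  (forall psi : sympvec C h, inF2 c z psi ->
     sform psi (vconj (omega c z)) = 0 -> psi != 0 ->
     'i * sform psi (vconj psi) < 0).

Definition signature (C : numClosedFieldType) (n : nat) (A : 'M[C]_n) (p q : nat) : Prop :=
  exists lam : 'I_n -> C,
    char_poly A = \prod_(i < n) ('X - (lam i)%:P) /\
    (forall i, lam i \is Num.real) /\
    #|[set i | 0 < lam i]| = p /\ #|[set i | lam i < 0]| = q.

Definition imvec (C : numClosedFieldType) (h : nat) (z : 'rV[C]_h) : 'rV[C]_h :=
  \row_i 'Im (z 0 i).

(* Main.v *)
Require Import Defs.
From HB Require Import structures.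
From mathcomp Require Import all_boot all_order all_algebra.
From mathcomp Require Import ring.
From Stdlib Require Import FunctionalExtensionality.
Import Order.TTheory GRing.Theory Num.Theory.
Set Implicit Arguments. Unset Strict Implicit.
Local Open Scope ring_scope.


Section Conj.
Variable C : numClosedFieldType.
Lemma cjD (x y : C) : (x + y)^* = x^* + y^*. Proof. exact: rmorphD. Qed.
Lemma cjB (x y : C) : (x - y)^* = x^* - y^*. Proof. exact: rmorphB. Qed.
Lemma cjN (x : C) : (- x)^* = - x^*. Proof. exact: rmorphN. Qed.
Lemma cjM (x y : C) : (x * y)^* = x^* * y^*. Proof. exact: rmorphM. Qed.
Lemma cj_sum n (F : 'I_n -> C) : (\sum_i F i)^* = \sum_i (F i)^*.
Proof. exact: rmorph_sum. Qed.
Lemma cjn (n : nat) : (n%:R : C)^* = n%:R. Proof. exact: rmorph_nat. Qed.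
Lemma cjV (x : C) : (x^-1)^* = (x^*)^-1. Proof. exact: fmorphV. Qed.
End Conj.

Section Tri.
Variable C : numClosedFieldType.
Variable h : nat.
Variable c : 'I_h -> 'I_h -> 'I_h -> C.
Hypothesis c_real : forall i j k, c i j k \is Num.real.

Definition S3 (F : 'I_h -> 'I_h -> 'I_h -> C) := \sum_i \sum_j \sum_k F i j k.
Lemma eqS3 F G : (forall i j k, F i j k = G i j k) -> S3 F = S3 G.
Proof. by move=> e; apply: eq_bigr=> i _; apply: eq_bigr=> j _; apply: eq_bigr. Qed.
Lemma S3_213 F : S3 (fun i j k => F j i k) = S3 F.
Proof. by rewrite /S3 exchange_big. Qed.
Lemma S3_132 F : S3 (fun i j k => F i k j) = S3 F.
Proof. by apply: eq_bigr=> i _; rewrite exchange_big. Qed.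
Lemma S3_231 F : S3 (fun i j k => F j k i) = S3 F.
Proof. by rewrite -[RHS]S3_132 -[RHS]S3_213. Qed.
Lemma S3_312 F : S3 (fun i j k => F k i j) = S3 F.
Proof. by rewrite -[RHS]S3_213 -[RHS]S3_132. Qed.
Lemma S3_321 F : S3 (fun i j k => F k j i) = S3 F.
Proof. by rewrite -[RHS]S3_132 -[RHS]S3_213 -[RHS]S3_132. Qed.
Lemma S3D F G : S3 (fun i j k => F i j k + G i j k) = S3 F + S3 G.
Proof.
rewrite /S3 -big_split; apply: eq_bigr=> i _; rewrite -big_split.
by apply: eq_bigr=> j _; rewrite -big_split.
Qed.

Definition T (u v w : 'I_h -> C) := S3 (fun i j k => c i j k * u i * v j * w k).
Definition vadd (u v : 'I_h -> C) := fun i => u i + v i.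
Definition vscl (a : C) (u : 'I_h -> C) := fun i => a * u i.
Definition vcj (u : 'I_h -> C) := fun i => (u i)^*.

Lemma TD1 u u' v w : T (vadd u u') v w = T u v w + T u' v w.
Proof. by rewrite /T -S3D; apply: eqS3=> i j k; rewrite /vadd; ring. Qed.
Lemma TD2 u v v' w : T u (vadd v v') w = T u v w + T u v' w.
Proof. by rewrite /T -S3D; apply: eqS3=> i j k; rewrite /vadd; ring. Qed.
Lemma TD3 u v w w' : T u v (vadd w w') = T u v w + T u v w'.
Proof. by rewrite /T -S3D; apply: eqS3=> i j k; rewrite /vadd; ring. Qed.
Lemma S3Z a F : S3 (fun i j k => a * F i j k) = a * S3 F.
Proof.
rewrite /S3 mulr_sumr; apply: eq_bigr=> i _; rewrite mulr_sumr.
by apply: eq_bigr=> j _; rewrite mulr_sumr.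
Qed.
Lemma TZ1 a u v w : T (vscl a u) v w = a * T u v w.
Proof. by rewrite /T -S3Z; apply: eqS3=> i j k; rewrite /vscl; ring. Qed.
Lemma TZ2 a u v w : T u (vscl a v) w = a * T u v w.
Proof. by rewrite /T -S3Z; apply: eqS3=> i j k; rewrite /vscl; ring. Qed.
Lemma TZ3 a u v w : T u v (vscl a w) = a * T u v w.
Proof. by rewrite /T -S3Z; apply: eqS3=> i j k; rewrite /vscl; ring. Qed.
Lemma Tcj u v w : (T u v w)^* = T (vcj u) (vcj v) (vcj w).
Proof.
rewrite /T /S3 cj_sum; apply: eq_bigr=> i _; rewrite cj_sum.
apply: eq_bigr=> j _; rewrite cj_sum; apply: eq_bigr=> k _.
by rewrite !cjM (conj_Creal (c_real i j k)).
Qed.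
Lemma vcjD u v : vcj (vadd u v) = vadd (vcj u) (vcj v).
Proof. by apply: functional_extensionality=> i; rewrite /vcj /vadd cjD. Qed.
Lemma vcjZ a u : vcj (vscl a u) = vscl a^* (vcj u).
Proof. by apply: functional_extensionality=> i; rewrite /vcj /vscl cjM. Qed.
Lemma vcjK u : vcj (vcj u) = u.
Proof. by apply: functional_extensionality=> i; rewrite /vcj conjCK. Qed.

Definition rv (z : 'rV[C]_h) := fun i => z 0 i.

Lemma cubicT z : cubic c z = T (rv z) (rv z) (rv z).
Proof. by []. Qed.

Definition Dq (z u : 'I_h -> C) := T u z z + T z u z + T z z u.
Definition H6 (z b a : 'I_h -> C) := T b a z + T b z a + T a b z + T z b a + T a z b + T z a b.

Lemma dcubicT z (b : 'I_h -> C) :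
  \sum_i dcubic c z i * b i = Dq (rv z) b.
Proof.
rewrite /Dq.
have -> : \sum_i dcubic c z i * b i =
  S3 (fun i j k => c i j k * z 0 j * z 0 k * b i + c j i k * z 0 j * z 0 k * b i
    + c j k i * z 0 j * z 0 k * b i).
  apply: eq_bigr=> i _; rewrite /dcubic mulr_suml; apply: eq_bigr=> j _.
  by rewrite mulr_suml; apply: eq_bigr=> k _; rewrite /rv; ring.
rewrite !S3D /T; congr (_ + _ + _).
- by apply: eqS3=> i j k; rewrite /rv; ring.
- by rewrite -[RHS]S3_213; apply: eqS3=> i j k; rewrite /rv; ring.
- by rewrite -[RHS]S3_231; apply: eqS3=> i j k; rewrite /rv; ring.
Qed.

Lemma d2cubicT z (b a : 'I_h -> C) :
  \sum_i \sum_j b i * d2cubic c z i j * a j = H6 (rv z) b a.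
Proof.
rewrite /H6.
have -> : \sum_i \sum_j b i * d2cubic c z i j * a j =
  S3 (fun i j k => c i j k * b i * a j * z 0 k + c i k j * b i * a j * z 0 k
    + c j i k * b i * a j * z 0 k + c k i j * b i * a j * z 0 k
    + c j k i * b i * a j * z 0 k + c k j i * b i * a j * z 0 k).
  apply: eq_bigr=> i _; apply: eq_bigr=> j _; rewrite /d2cubic mulr_sumr mulr_suml.
  by apply: eq_bigr=> k _; rewrite /rv; ring.
rewrite !S3D /T; congr (_ + _ + _ + _ + _ + _);
  first [ by apply: eqS3=> i j k; rewrite /rv; ring
        | by rewrite -[RHS]S3_132; apply: eqS3=> i j k; rewrite /rv; ring
        | by rewrite -[RHS]S3_213; apply: eqS3=> i j k; rewrite /rv; ring
        | by rewrite -[RHS]S3_231; apply: eqS3=> i j k; rewrite /rv; ring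
        | by rewrite -[RHS]S3_312; apply: eqS3=> i j k; rewrite /rv; ring
        | by rewrite -[RHS]S3_321; apply: eqS3=> i j k; rewrite /rv; ring ].
Qed.

End Tri.


Section Psi.
Variable C : numClosedFieldType.
Variable h : nat.
Variable c : 'I_h -> 'I_h -> 'I_h -> C.
Hypothesis c_real : forall i j k, c i j k \is Num.real.
Variable z : 'rV[C]_h.

Definition psi a0 (a : 'I_h -> C) : sympvec C h :=
  a0 *: omega c z + \sum_j a j *: domega c z j.

Lemma psiE a0 a r k :
  psi a0 a r k = a0 * omega c z r k + \sum_j a j * domega c z j r k.
Proof. by rewrite !mxE summxE; apply: congr2 => //; apply: eq_bigr=> j _; rewrite mxE. Qed.

Lemma psi00 a0 a : psi a0 a 0 ord0 = - a0 * cubic c z - \sum_j dcubic c z j * a j.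
Proof.
rewrite psiE mxE eqxx unlift_none; congr (_ + _); first by ring.
rewrite -sumrN; apply: eq_bigr=> j _; rewrite mxE eqxx unlift_none; ring.
Qed.

Lemma psi10 a0 a : psi a0 a 1 ord0 = a0.
Proof.
rewrite psiE mxE /= unlift_none big1 ?mulr1 ?addr0 // => j _.
by rewrite mxE /= unlift_none mulr0.
Qed.

Lemma psi0l a0 a i : psi a0 a 0 (lift ord0 i) =
  a0 * dcubic c z i + \sum_j a j * d2cubic c z i j.
Proof.
rewrite psiE mxE eqxx liftK; congr (_ + _).
by apply: eq_bigr=> j _; rewrite mxE eqxx liftK.
Qed.

Lemma psi1l a0 a i : psi a0 a 1 (lift ord0 i) = a0 * z 0 i + a i.
Proof.
rewrite psiE mxE /= liftK; congr (_ + _).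
rewrite (bigD1 i) //= mxE /= liftK eqxx mulr1 big1 ?addr0 // => j /negbTE ji.
by rewrite mxE /= liftK eq_sym ji mulr0.
Qed.

Definition Yf (u v : sympvec C h) := \sum_k u 0 k * (v 1 k)^*.

Lemma sform_Y u v : sform u (vconj v) = Yf u v - (Yf v u)^*.
Proof.
rewrite /sform /Yf cj_sum -sumrB; apply: eq_bigr=> k _.
by rewrite !mxE cjM conjCK [_ * u 1 k]mulrC.
Qed.

Lemma sum_psi0 a0 a b :
  \sum_i (a0 * dcubic c z i + \sum_j a j * d2cubic c z i j) * b i =
  a0 * Dq c (rv z) b + H6 c (rv z) b a.
Proof.
rewrite -dcubicT -d2cubicT mulr_sumr -big_split; apply: eq_bigr=> i _.
rewrite mulrDl mulr_suml; congr (_ + _); first by ring.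
by apply: eq_bigr=> j _; ring.
Qed.

Lemma Ypsi a0 a b0 b : Yf (psi a0 a) (psi b0 b) =
  (- a0 * T c (rv z) (rv z) (rv z) - Dq c (rv z) a) * b0^*
  + a0 * Dq c (rv z) (vadd (vscl b0^* (vcj (rv z))) (vcj b))
  + H6 c (rv z) (vadd (vscl b0^* (vcj (rv z))) (vcj b)) a.
Proof.
rewrite /Yf big_ord_recl psi00 psi10 dcubicT -addrA; congr (_ + _).
rewrite -sum_psi0; apply: eq_bigr=> i _.
by rewrite psi0l psi1l cjD cjM /vadd /vscl /vcj /rv.
Qed.

Definition dz := vadd (rv z) (vscl (-1) (vcj (rv z))).

Lemma sform_psi a0 a b0 b :
  sform (psi a0 a) (vconj (psi b0 b)) =
  - a0 * b0^* * T c dz dz dz - (b0^* * Dq c dz a - a0 * Dq c dz (vcj b))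
  + H6 c dz (vcj b) a.
Proof.
rewrite sform_Y !Ypsi /Dq /H6 /dz.
rewrite !(cjD, cjM, cjN, cjB, conjCK, Tcj c_real, vcjD, vcjZ, vcjK).
rewrite !(TD1, TD2, TD3, TZ1, TZ2, TZ3).
ring.
Qed.

End Psi.


Section HR.
Variable C : numClosedFieldType.
Variable h : nat.
Variable c : 'I_h -> 'I_h -> 'I_h -> C.
Hypothesis c_real : forall i j k, c i j k \is Num.real.
Variable z : 'rV[C]_h.


Let hi : 'i * 'i = -1 :> C. Proof. by rewrite -expr2 sqrCi. Qed.

Definition yv := rv (imvec z).

Lemma vcj_yv : vcj yv = yv.
Proof.
apply: functional_extensionality => i; rewrite /vcj /yv /rv mxE.
exact: conj_Creal (Creal_Im _).
Qed.

Lemma dz_y : dz z = vscl (2 * 'i) yv.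
Proof.
apply: functional_extensionality => i; rewrite /dz /vadd /vscl /vcj /yv /rv mxE ImE.
field: hi; rewrite ?pnatr_eq0 //.
Qed.

Definition phi := T c yv yv yv.
Definition Dy a := Dq c yv a.
Definition Hq a := H6 c yv (vcj a) a.

Lemma sform_psi_y a0 a b0 b :
  sform (psi c z a0 a) (vconj (psi c z b0 b)) =
  8 * 'i * a0 * b0^* * phi + 4 * (b0^* * Dy a - a0 * Dy (vcj b))
  + 2 * 'i * H6 c yv (vcj b) a.
Proof.
rewrite sform_psi // dz_y /Dy /phi /Dq /H6 !(TZ1, TZ2, TZ3).
ring: hi.
Qed.

Lemma phi_real : phi^* = phi.
Proof. by rewrite /phi (Tcj c_real) vcj_yv. Qed.

Lemma Dy_cj a : Dy (vcj a) = (Dy a)^*.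
Proof. by rewrite /Dy /Dq !cjD !(Tcj c_real) vcj_yv. Qed.

Lemma Hq_real a : (Hq a)^* = Hq a.
Proof. rewrite /Hq /H6 !cjD !(Tcj c_real) vcj_yv vcjK; ring. Qed.

Lemma zero_vec : (fun _ : 'I_h => 0 : C) = vscl 0 yv.
Proof. by apply: functional_extensionality => i; rewrite /vscl mul0r. Qed.

Lemma omega_psi : omega c z = psi c z 1 (fun _ => 0).
Proof.
rewrite /psi scale1r big1 ?addr0 // => j _; exact: scale0r.
Qed.

Lemma sform_omega : sform (omega c z) (vconj (omega c z)) = 8 * 'i * phi.
Proof.
rewrite omega_psi sform_psi_y conjC1 zero_vec /Dy /Dq /H6 vcjZ !(TZ1, TZ2, TZ3).
ring.
Qed.

Lemma constraint a0 a :
  sform (psi c z a0 a) (vconj (omega c z)) = 8 * 'i * a0 * phi + 4 * Dy a.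
Proof.
rewrite omega_psi sform_psi_y conjC1 zero_vec /Dy /Dq /H6 vcjZ !(TZ1, TZ2, TZ3).
ring.
Qed.

Lemma Kform a : phi != 0 ->
  'i * sform (psi c z ('i * Dy a / (2 * phi)) a) (vconj (psi c z ('i * Dy a / (2 * phi)) a)) =
  2 * (Dy a * (Dy a)^* / phi - Hq a).
Proof.
move=> phi0; set a0 := 'i * Dy a / (2 * phi).
have ca0 : a0^* = - 'i * (Dy a)^* / (2 * phi).
  rewrite /a0 !cjM conjCi cjV cjM phi_real.
  by have -> : (2 : C)^* = 2 by rewrite (cjn C 2).
rewrite sform_psi_y ca0 Dy_cj /a0 /Hq.
field: hi; rewrite ?mulf_neq0 ?pnatr_eq0 //.
Qed.


Lemma psi_neq0 a0 a : (exists i, a i != 0) -> psi c z a0 a != 0.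
Proof.
case=> i ai; apply/negP => /eqP e.
have e1 := congr1 (fun M : sympvec C h => M 1 ord0) e.
have e2 := congr1 (fun M : sympvec C h => M 1 (lift ord0 i)) e.
simpl in e1, e2; rewrite psi10 mxE in e1.
rewrite psi1l mxE e1 mul0r add0r in e2.
by rewrite e2 eqxx in ai.
Qed.

Lemma Dy0 : Dy (fun _ => 0) = 0.
Proof. by rewrite zero_vec /Dy /Dq !(TZ1, TZ2, TZ3) !mul0r !addr0. Qed.

Theorem HR_reduce :
  HodgeRiemann c z <->
  (phi < 0 /\ forall a, (exists i, a i != 0) -> Dy a * (Dy a)^* / phi < Hq a).
Proof.
have S1 : (0 < 'i * sform (omega c z) (vconj (omega c z))) = (phi < 0).
  rewrite sform_omega.
  have -> : 'i * (8 * 'i * phi) = - (8 * phi) by ring: hi.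
  by rewrite oppr_gt0 pmulr_rlt0 // ltr0n.
have four0 : (4 : C) != 0 by rewrite pnatr_eq0.
split.
- case=> H1 H2; have phn : phi < 0 by rewrite -S1.
  have ph0 := ltr0_neq0 phn.
  split => // a anz.
  have := H2 (psi c z ('i * Dy a / (2 * phi)) a).
  rewrite Kform // pmulr_rlt0 ?ltr0n // subr_lt0; apply.
  + by exists ('i * Dy a / (2 * phi)), a.
  + rewrite constraint; field: hi; rewrite ?mulf_neq0 ?pnatr_eq0 //.
  + exact: psi_neq0.
- case=> phn H; have ph0 := ltr0_neq0 phn.
  split; first by rewrite S1.
  move=> psi' [a0 [a ->]]; rewrite -/(psi c z a0 a) constraint => Hc Hnz.
  move/eqP: Hc; rewrite addr_eq0 => /eqP e.
  have eD : Dy a = - (2 * 'i * a0 * phi).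
    apply: (mulfI four0); have -> : 4 * Dy a = - (8 * 'i * a0 * phi) by rewrite e opprK.
    ring.
  have ea0 : a0 = 'i * Dy a / (2 * phi).
    rewrite eD; field: hi; rewrite ?mulf_neq0 ?pnatr_eq0 //.
  case: (boolP [exists i, a i != 0]) => [/existsP [i ai] | /existsPn an].
  + rewrite ea0 Kform // pmulr_rlt0 ?ltr0n // subr_lt0.
    by apply: H; exists i.
  + have a0f : a = (fun _ => 0).
      by apply: functional_extensionality => i; apply/eqP; move: (an i); rewrite negbK.
    move: Hnz; rewrite ea0 a0f Dy0 mulr0 mul0r /psi.
    rewrite big1 ?scale0r ?addr0 ?eqxx // => j _; exact: scale0r.
Qed.

End HR.


Section LA.
Variable C : numClosedFieldType.
Variable n : nat.
Variable A : 'M[C]_n.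
Hypothesis Areal : forall i j, A i j \is Num.real.
Hypothesis Asym : forall i j, A i j = A j i.

Lemma A_herm : A \is hermsymmx.
Proof.
apply/is_hermitianmxP; rewrite expr0 scale1r; apply/matrixP => i j.
by rewrite !mxE Asym (conj_Creal (Areal _ _)).
Qed.

Definition Pm := spectralmx A.
Definition dg k := spectral_diag A 0 k.

Lemma A_spec : A = invmx Pm *m diag_mx (spectral_diag A) *m Pm.
Proof. exact/orthomx_spectralP/hermitian_normalmx/A_herm. Qed.

Lemma dg_real k : dg k \is Num.real.
Proof. by have /mxOverP := hermitian_spectral_diag_real A_herm; apply. Qed.

Lemma AE i j : A i j = \sum_k (Pm k i)^* * dg k * Pm k j.
Proof.
rewrite {1}A_spec invmx_unitary ?spectral_unitarymx // mul_mx_diag !mxE.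
by apply: eq_bigr => k _; rewrite !mxE.
Qed.

Lemma UU1 k l : \sum_j Pm k j * (Pm l j)^* = (k == l)%:R.
Proof.
have /unitarymxP/matrixP/(_ k l) := spectral_unitarymx A.
by rewrite !mxE => <-; apply: eq_bigr => j _; rewrite !mxE.
Qed.

Lemma UU2 j m : \sum_k (Pm k j)^* * Pm k m = (j == m)%:R.
Proof.
have := mulVmx (spectral_unit A).
rewrite invmx_unitary ?spectral_unitarymx // => /matrixP/(_ j m).
by rewrite !mxE => <-; apply: eq_bigr => k _; rewrite !mxE.
Qed.

Definition Pv (a : 'I_n -> C) k := \sum_j Pm k j * a j.
Definition Pi (w : 'I_n -> C) j := \sum_k (Pm k j)^* * w k.

Lemma sum_delta (f : 'I_n -> C) k : \sum_l f l * (k == l)%:R = f k.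
Proof.
rewrite (bigD1 k) //= eqxx mulr1 big1 ?addr0 // => l.
by rewrite eq_sym => /negbTE ->; rewrite mulr0.
Qed.

Lemma Pv_Pi w k : Pv (Pi w) k = w k.
Proof.
rewrite /Pv /Pi (eq_bigr (fun j => \sum_l Pm k j * ((Pm l j)^* * w l))); last first.
  by move=> j _; rewrite mulr_sumr.
rewrite exchange_big /= -[RHS](sum_delta w k); apply: eq_bigr => l _.
by rewrite -UU1 mulr_sumr; apply: eq_bigr => j _; ring.
Qed.

Lemma Pi_Pv a j : Pi (Pv a) j = a j.
Proof.
rewrite /Pv /Pi (eq_bigr (fun k => \sum_m (Pm k j)^* * (Pm k m * a m))); last first.
  by move=> k _; rewrite mulr_sumr.
rewrite exchange_big /= -[RHS](sum_delta a j); apply: eq_bigr => m _.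
by rewrite -UU2 mulr_sumr; apply: eq_bigr => k _; ring.
Qed.

Definition Bf (b a : 'I_n -> C) := \sum_i \sum_j b i * A i j * a j.

Lemma Bf_diag b a : Bf b a = \sum_k dg k * (Pv (vcj b) k)^* * Pv a k.
Proof.
rewrite /Bf /Pv.
transitivity (S3 (fun i j k => b i * (Pm k i)^* * dg k * Pm k j * a j)).
  apply: eq_bigr => i _; apply: eq_bigr => j _; rewrite AE mulr_sumr mulr_suml.
  by apply: eq_bigr => k _; ring.
rewrite -[LHS]S3_231 /S3; apply: eq_bigr => k _.
rewrite cj_sum -mulrA big_distrlr mulr_sumr; apply: eq_bigr => i _.
rewrite mulr_sumr; apply: eq_bigr => j _.
by rewrite /vcj /= cjM conjCK; ring.
Qed.


Lemma charA : char_poly A = \prod_(i < n) ('X - (dg i)%:P).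
Proof.
have -> : char_poly A = char_poly (diag_mx (spectral_diag A)).
  rewrite /char_poly {1}A_spec /char_poly_mx.
  set D := diag_mx _.
  have PU : Pm \in unitmx := spectral_unit A.
  have e1 : map_mx polyC (invmx Pm) *m map_mx polyC Pm = 1%:M.
    by rewrite -map_mxM mulVmx // map_mx1.
  have e2 : ('X%:M : 'M[{poly C}]_n) =
      map_mx polyC (invmx Pm) *m 'X%:M *m map_mx polyC Pm.
    by rewrite mul_mx_scalar -scalemxAl e1 scalemx1.
  rewrite !map_mxM {1}e2 -mulmxBl -mulmxBr !det_mulmx mulrAC -det_mulmx e1 det1 mul1r.
  by [].
rewrite char_poly_trig ?diag_mx_is_trig //; apply: eq_bigr => i _.
by rewrite mxE eqxx mulr1n.
Qed.

Lemma card_seq (lam : 'I_n -> C) (P : pred C) :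
  #|[set i | P (lam i)]| = \big[addn/0%N]_(x <- map lam (index_enum 'I_n) | P x) 1%N.
Proof. by rewrite big_map sum1dep_card. Qed.

Lemma sig_counts p q : signature A p q <->
  (#|[set i | 0 < dg i]| = p /\ #|[set i | dg i < 0]| = q).
Proof.
split; last first.
  by case=> hp hq; exists dg; split; [exact: charA | split; [exact: dg_real|]].
case=> lam [hc [hr [hp hq]]].
have pe : perm_eq (map lam (index_enum 'I_n)) (map dg (index_enum 'I_n)).
  by apply: prod_XsubC_eq; rewrite !big_map -hc -charA.
rewrite -hp -hq !card_seq.
split; [exact: (esym (@perm_big nat addn 0%N C _ _ (fun x : C => (0 < x)%R) (fun _ => 1%N) pe)) | ].
rewrite (card_seq lam (fun x => x < 0)) (card_seq dg (fun x => x < 0)).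
exact: (esym (@perm_big nat addn 0%N C _ _ (fun x : C => (x < 0)%R) (fun _ => 1%N) pe)).
Qed.

End LA.


Section Core.
Variable C : numClosedFieldType.
Variable n : nat.
Variables e eta : 'I_n -> C.
Hypothesis ereal : forall k, e k \is Num.real.

Definition Fd (w : 'I_n -> C) := \sum_k e k * (w k)^* * w k.
Definition Bd (w : 'I_n -> C) := \sum_k e k * (eta k)^* * w k.
Definition Sd := Fd eta.
Definition Gd w := 3 * (Bd w * (Bd w)^*) - 2 * (Fd w * Sd).

Lemma sq_ge0 (x : C) : 0 <= x^* * x.
Proof. by rewrite mulrC mul_conjC_ge0. Qed.
Lemma sq_real (x : C) : x^* * x \is Num.real.
Proof. exact: ger0_real (sq_ge0 x). Qed.
Lemma Fd_real w : Fd w \is Num.real.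
Proof. by apply: rpred_sum => k _; rewrite -mulrA; apply: realM; [exact: ereal | exact: sq_real]. Qed.
Lemma Sd_cj : Sd^* = Sd.
Proof. exact: conj_Creal (Fd_real _). Qed.

Lemma cond_iff w : Sd < 0 ->
  (Bd w / 2 * (Bd w / 2)^* / (Sd / 6) < Fd w) = (0 < Gd w).
Proof.
move=> Sn; have S0 := ltr0_neq0 Sn.
have -> : Bd w / 2 * (Bd w / 2)^* / (Sd / 6) = (3 * (Bd w * (Bd w)^*)) / (2 * Sd).
  rewrite cjM cjV (cjn C 2); field; rewrite ?S0 ?pnatr_eq0 //.
rewrite ltr_ndivrMr; last by rewrite pmulr_rlt0 // ltr0n.
rewrite /Gd subr_gt0; congr (_ < _); ring.
Qed.

Lemma cj_sumP (P : pred 'I_n) (F : 'I_n -> C) :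
  (\sum_(k | P k) F k)^* = \sum_(k | P k) (F k)^*.
Proof. exact: rmorph_sum. Qed.

Lemma CS (P : pred 'I_n) (f v u : 'I_n -> C) : (forall k, P k -> 0 <= f k) ->
  (\sum_(k | P k) f k * (u k)^* * v k) * (\sum_(k | P k) f k * (u k)^* * v k)^*
  <= (\sum_(k | P k) f k * (v k)^* * v k) * (\sum_(k | P k) f k * (u k)^* * u k).
Proof.
move=> fP.
set a := \sum_(k | P k) f k * (v k)^* * v k.
set b := \sum_(k | P k) f k * (u k)^* * u k.
set X := \sum_(k | P k) f k * (u k)^* * v k.
have Xc : X^* = \sum_(k | P k) f k * u k * (v k)^*.
  rewrite /X cj_sumP; apply: eq_bigr => k Pk.
  by rewrite !cjM conjCK (conj_Creal (ger0_real (fP k Pk))).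
pose Q k l := f k * (v k)^* * v k * (f l * (u l)^* * u l)
            - f k * (u k)^* * v k * (f l * u l * (v l)^*).
have L : \sum_(k | P k) \sum_(l | P l)
      f k * f l * ((v k * u l - v l * u k) * (v k * u l - v l * u k)^*)
    = 2 * (a * b - X * X^*).
  transitivity (\sum_(k | P k) \sum_(l | P l) (Q k l + Q l k)).
    apply: eq_bigr => k _; apply: eq_bigr => l _.
    by rewrite /Q cjB !cjM; ring.
  have E : \sum_(k | P k) \sum_(l | P l) Q k l = a * b - X * X^*.
    rewrite Xc /a /b /X !big_distrlr -sumrB; apply: eq_bigr => k _.
    by rewrite -sumrB.
  rewrite (eq_bigr (fun k => \sum_(l | P l) Q k l + \sum_(l | P l) Q l k));
    last by move=> k _; rewrite big_split.
  rewrite big_split /= [X in _ + X = _]exchange_big /= E; ring.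
have : 0 <= 2 * (a * b - X * X^*).
  rewrite -L; apply: sumr_ge0 => k Pk; apply: sumr_ge0 => l Pl.
  by apply: mulr_ge0; [apply: mulr_ge0; [exact: fP | exact: fP] | exact: mul_conjC_ge0].
by rewrite pmulr_rge0 ?ltr0n // subr_ge0.
Qed.

Definition delta k : 'I_n -> C := fun m => (m == k)%:R.

Lemma sum_d (F : 'I_n -> C) k : (forall m, m != k -> F m = 0) -> \sum_m F m = F k.
Proof. by move=> H; rewrite (bigD1 k) //= big1 ?addr0. Qed.

Lemma sum2 (F : 'I_n -> C) k l : k != l ->
  (forall m, m != k -> m != l -> F m = 0) -> \sum_m F m = F k + F l.
Proof.
move=> kl H; rewrite (bigD1 k) //= (bigD1 l) /=; last by rewrite eq_sym.
by rewrite big1 ?addr0 // => m /andP [mk ml]; exact: H.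
Qed.

Lemma Fd_delta k : Fd (delta k) = e k.
Proof.
rewrite /Fd (@sum_d _ k) /delta ?eqxx ?(cjn C 1) ?mulr1 // => m /negbTE ->.
by rewrite mulr0.
Qed.

Lemma Bd_delta k : Bd (delta k) = e k * (eta k)^*.
Proof.
rewrite /Bd (@sum_d _ k) /delta ?eqxx ?mulr1 // => m /negbTE ->.
by rewrite mulr0.
Qed.


Section Dir1.
Hypothesis Sn : Sd < 0.
Hypothesis H : forall w, (exists k, w k != 0) -> 0 < Gd w.

Lemma delta_nz k : exists m, delta k m != 0.
Proof. by exists k; rewrite /delta eqxx oner_eq0. Qed.

Lemma nz_of k : e k != 0.
Proof.
apply/negP => /eqP ek.
have := H (delta_nz k).
by rewrite /Gd Fd_delta Bd_delta ek !mul0r ?conjC0 !mulr0 subrr ltxx.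
Qed.

Lemma neg_uniq k l : e k < 0 -> e l < 0 -> k = l.
Proof.
move=> ek el; apply/eqP; apply/negPn/negP => kl.
have Sp : 0 < e k * Sd by rewrite nmulr_rgt0.
case: (eqVneq (eta k) 0) => [etk | etk].
  have := H (delta_nz k).
  rewrite /Gd Fd_delta Bd_delta etk conjC0 !(mulr0, mul0r) sub0r oppr_gt0.
  rewrite pmulr_rlt0 ?ltr0n // => neg.
  by have := lt_trans neg Sp; rewrite ltxx.
pose al := e l * (eta l)^*; pose be := - (e k * (eta k)^*).
pose w := fun m : 'I_n => (if m == k then al else 0) + (if m == l then be else 0).
have lk : (l == k) = false by apply/negbTE; rewrite eq_sym.
have wk : w k = al by rewrite /w eqxx (negbTE kl) addr0.
have wl : w l = be by rewrite /w eqxx lk add0r.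
have wm : forall m, m != k -> m != l -> w m = 0.
  by move=> m /negbTE mk /negbTE ml; rewrite /w mk ml addr0.
have B0 : Bd w = 0.
  rewrite /Bd (sum2 kl); last by move=> m mk ml; rewrite wm // mulr0.
  by rewrite wk wl /al /be; ring.
have F0 : Fd w <= 0.
  rewrite /Fd (sum2 kl); last by move=> m mk ml; rewrite wm // conjC0 !mulr0.
  rewrite -!mulrA -[0](addr0 0); apply: lerD; apply: mulr_le0_ge0;
    by [exact: ltW | exact: sq_ge0].
have wnz : exists m, w m != 0.
  exists l; rewrite wl /be oppr_eq0 mulf_neq0 ?conjC_eq0 //.
  exact: ltr0_neq0.
have := H wnz.
rewrite /Gd B0 conjC0 !mulr0 sub0r oppr_gt0 pmulr_rlt0 ?ltr0n // => FS.
by have := lt_le_trans FS (mulr_le0 F0 (ltW Sn)); rewrite ltxx.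
Qed.

Lemma ex_neg : exists m, e m < 0.
Proof.
case: (boolP [exists m, e m < 0]) => [/existsP // | /existsPn hn].
have : 0 <= Sd.
  rewrite /Sd /Fd; apply: sumr_ge0 => k _; rewrite -mulrA; apply: mulr_ge0.
    by rewrite (real_leNgt (real0 _) (ereal k)); exact: hn.
  exact: sq_ge0.
by move=> S0; have := le_lt_trans S0 Sn; rewrite ltxx.
Qed.

Lemma counts_of : #|[set k | 0 < e k]| = n.-1 /\ #|[set k | e k < 0]| = 1%N.
Proof.
have [m em] := ex_neg.
have negE : [set k | e k < 0] = [set m].
  apply/setP => k; rewrite !inE; apply/idP/eqP => [ek | ->//].
  exact: neg_uniq.
have posE : [set k | 0 < e k] = [set~ m].
  apply/setP => k; rewrite !inE; apply/idP/idP.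
    move=> ek; apply/eqP => km; subst k.
    by have := lt_trans em ek; rewrite ltxx.
  move=> km.
  have nneg : ~~ (e k < 0).
    by apply/negP => ek; move: km; rewrite (neg_uniq ek em) eqxx.
  by rewrite (real_ltNge (real0 _) (ereal k)) le_eqVlt negb_or nz_of.
by rewrite posE negE cardsC1 cards1 card_ord.
Qed.

End Dir1.

Lemma neg_of_counts : #|[set k | 0 < e k]| = n.-1 -> #|[set k | e k < 0]| = 1%N ->
  exists m, e m < 0 /\ forall k, k != m -> 0 < e k.
Proof.
move=> hp /eqP/cards1P [m negE]; exists m.
have em : e m < 0 by have := set11 m; rewrite -negE inE.
split=> // k km.
have posE : [set k | 0 < e k] = [set~ m].
  apply/eqP; rewrite eqEcard cardsC1 card_ord hp leqnn andbT.
  apply/subsetP => x; rewrite !inE => ex; apply/eqP => xm; subst x.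
  by have := lt_trans em ex; rewrite ltxx.
have : k \in [set~ m] by rewrite !inE.
by rewrite -posE inE.
Qed.


Lemma Bd_shift v t : Bd (fun k => v k + t * eta k) = Bd v + t * Sd.
Proof.
rewrite /Bd /Sd /Fd mulr_sumr -big_split; apply: eq_bigr => k _ /=; ring.
Qed.

Lemma Fd_shift v t : Fd (fun k => v k + t * eta k) =
  Fd v + t * (Bd v)^* + t^* * Bd v + t * t^* * Sd.
Proof.
rewrite /Bd /Sd /Fd cj_sum !mulr_sumr -!big_split; apply: eq_bigr => k _ /=.
rewrite cjD !cjM conjCK (conj_Creal (ereal k)); ring.
Qed.

Section Dir2.
Hypothesis Sn : Sd < 0.
Variable m : 'I_n.
Hypothesis em : e m < 0.
Hypothesis epos : forall k, k != m -> 0 < e k.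

Lemma KL v : Bd v = 0 -> (exists k, v k != 0) -> 0 < Fd v.
Proof.
move=> B0 [k vk].
have ge : forall k, k != m -> 0 <= e k by move=> j jm; exact: ltW (epos jm).
have Fsplit : Fd v = e m * (v m)^* * v m + \sum_(k | k != m) e k * (v k)^* * v k.
  by rewrite /Fd (bigD1 m).
have Bsplit : Bd v = e m * (eta m)^* * v m + \sum_(k | k != m) e k * (eta k)^* * v k.
  by rewrite /Bd (bigD1 m).
have Ssplit : Sd = e m * (eta m)^* * eta m + \sum_(k | k != m) e k * (eta k)^* * eta k.
  by rewrite /Sd /Fd (bigD1 m).
set a := \sum_(k | k != m) e k * (v k)^* * v k in Fsplit.
set b := \sum_(k | k != m) e k * (eta k)^* * eta k in Ssplit.
set X := \sum_(k | k != m) e k * (eta k)^* * v k in Bsplit.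
have cs : X * X^* <= a * b := (@CS (fun k => k != m) e v eta ge).
have a0 : 0 <= a.
  by apply: sumr_ge0 => j jm; rewrite -mulrA; apply: mulr_ge0; [exact: ge | exact: sq_ge0].
have b0 : 0 <= b.
  by apply: sumr_ge0 => j jm; rewrite -mulrA; apply: mulr_ge0; [exact: ge | exact: sq_ge0].
have XE : X = - (e m * (eta m)^* * v m).
  by apply/eqP; rewrite -addr_eq0 addrC -Bsplit B0.
case: (eqVneq (v m) 0) => vm.
  have km : k != m by apply/eqP => km; subst k; rewrite vm eqxx in vk.
  rewrite Fsplit vm conjC0 !mulr0 add0r /a (bigD1 k) //=.
  apply: ltr_pwDl.
    by rewrite -mulrA; apply: mulr_gt0; [exact: epos | rewrite mulrC mul_conjC_gt0].
  by apply: sumr_ge0 => j /andP [jm _]; rewrite -mulrA; apply: mulr_ge0; [exact: ge | exact: sq_ge0].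
rewrite (real_ltNge (real0 _) (Fd_real v)); apply/negP => hle.
set q := - (e m * (v m)^* * v m).
set pq := - (e m * (eta m)^* * eta m).
have aq : a <= q by rewrite /q -subr_le0 opprK addrC -Fsplit.
have qpos : 0 < q.
  by rewrite /q -mulrA -mulNr; apply: mulr_gt0; [rewrite oppr_gt0 | rewrite mulrC mul_conjC_gt0].
have bpq : b < pq.
  by rewrite /pq -subr_lt0 opprK addrC -Ssplit.
have XX : X * X^* = q * pq.
  rewrite XE /q /pq cjN !cjM conjCK (conj_Creal (ereal m)); ring.
have : q * b < q * pq by rewrite ltr_pM2l.
rewrite -XX => H1.
have H2 : a * b <= q * b by exact: ler_wpM2r.
have := le_lt_trans (le_trans cs H2) H1.
by rewrite ltxx.
Qed.

Lemma Gpos w : (exists k, w k != 0) -> 0 < Gd w.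
Proof.
move=> [k wk].
have S0 := ltr0_neq0 Sn.
set t := Bd w / Sd.
pose v := fun k => w k - t * eta k.
have wv : w = (fun k => v k + t * eta k).
  by apply: functional_extensionality => j; rewrite /v subrK.
have Bv : Bd v = 0.
  have e1 := Bd_shift v t; rewrite -wv in e1.
  have tS : t * Sd = Bd w by rewrite /t mulfVK.
  have -> : Bd v = Bd w - t * Sd by rewrite e1 addrK.
  by rewrite tS subrr.
have Fw : Fd w = Fd v + t * t^* * Sd.
  by rewrite wv Fd_shift Bv conjC0 !mulr0 !addr0.
have Bw : Bd w = t * Sd.
  by rewrite wv Bd_shift Bv add0r.
have GE : Gd w = t * t^* * (Sd * Sd) + (- 2 * Sd) * Fd v.
  rewrite /Gd Fw Bw cjM Sd_cj; ring.
rewrite GE.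
have tt0 : 0 <= t * t^* by exact: mul_conjC_ge0.
have SS : 0 < Sd * Sd by rewrite nmulr_rgt0.
have m2S : 0 < - 2 * Sd by rewrite mulNr oppr_gt0 pmulr_rlt0 ?ltr0n.
case: (boolP [exists j, v j != 0]) => [/existsP vnz | /existsPn vz].
  rewrite addrC; apply: ltr_pwDl; last by apply: mulr_ge0 => //; exact: ltW.
  by apply: mulr_gt0 => //; apply: KL.
have Fv0 : Fd v = 0.
  rewrite /Fd big1 // => j _; have := vz j; rewrite negbK => /eqP ->.
  by rewrite mulr0.
have tnz : t != 0.
  apply/negP => /eqP t0; move: wk; rewrite wv t0 mul0r addr0.
  by have := vz k; rewrite negbK => ->.
rewrite Fv0 mulr0 addr0; apply: mulr_gt0 => //.
by rewrite mul_conjC_gt0.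
Qed.

End Dir2.

Theorem core : Sd < 0 ->
  ((forall w, (exists k, w k != 0) -> Bd w / 2 * (Bd w / 2)^* / (Sd / 6) < Fd w) <->
   (#|[set k | 0 < e k]| = n.-1 /\ #|[set k | e k < 0]| = 1%N)).
Proof.
move=> Sn; split.
  move=> H; apply: (counts_of Sn) => w wnz; rewrite -cond_iff //; exact: H.
case=> hp hq; have [m [em ep]] := neg_of_counts hp hq.
move=> w wnz; rewrite cond_iff //; exact: (Gpos Sn em ep wnz).
Qed.

End Core.


Section Main.
Variable C : numClosedFieldType.
Variable h : nat.
Variable c : 'I_h -> 'I_h -> 'I_h -> C.
Hypothesis c_real : forall i j k, c i j k \is Num.real.
Variable z : 'rV[C]_h.

Let A := hessian c (imvec z).

Lemma Areal i j : A i j \is Num.real.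
Proof.
rewrite /A /hessian mxE /d2cubic; apply: rpred_sum => k _; apply: realM.
  by rewrite !realD ?c_real.
by rewrite mxE Creal_Im.
Qed.

Lemma Asym i j : A i j = A j i.
Proof.
rewrite /A /hessian !mxE /d2cubic; apply: eq_bigr => k _; ring.
Qed.

Lemma HqE a : Hq c z a = Bf A (vcj a) a.
Proof.
rewrite /Hq /yv -d2cubicT /Bf; apply: eq_bigr => i _; apply: eq_bigr => j _.
by rewrite /A /hessian mxE.
Qed.

Lemma BfE b a : Bf A b a = H6 c (yv z) b a.
Proof.
rewrite /yv -d2cubicT /Bf; apply: eq_bigr => i _; apply: eq_bigr => j _.
by rewrite /A /hessian mxE.
Qed.

Lemma DyE a : Dy c z a = Bf A (yv z) a / 2.
Proof. by rewrite BfE /Dy /Dq /H6; field. Qed.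

Lemma phiE : phi c z = Bf A (yv z) (yv z) / 6.
Proof. rewrite BfE /phi /H6; by field. Qed.

Let e := dg A.
Let eta := Pv A (yv z).

Lemma FdE a : Bf A (vcj a) a = Fd e (Pv A a).
Proof. by rewrite (Bf_diag Areal Asym) vcjK. Qed.

Lemma BdE a : Bf A (yv z) a = Bd e eta (Pv A a).
Proof. by rewrite (Bf_diag Areal Asym) vcj_yv. Qed.

Lemma SdE : Bf A (yv z) (yv z) = Sd e eta.
Proof. by rewrite BdE. Qed.

Lemma Pv0 a : (exists i, a i != 0) -> exists k, Pv A a k != 0.
Proof.
case=> i ai; case: (boolP [exists k, Pv A a k != 0]) => [/existsP // | /existsPn H].
move: ai; rewrite -(Pi_Pv A a i) /Pi big1 ?eqxx // => k _.
by have := H k; rewrite negbK => /eqP ->; rewrite mulr0.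
Qed.

Lemma Pi0 w : (exists k, w k != 0) -> exists i, Pi A w i != 0.
Proof.
case=> k wk; case: (boolP [exists i, Pi A w i != 0]) => [/existsP // | /existsPn H].
move: wk; rewrite -(Pv_Pi A w k) /Pv big1 ?eqxx // => j _.
by have := H j; rewrite negbK => /eqP ->; rewrite mulr0.
Qed.

Theorem main_iff :
  HodgeRiemann c z <->
  (cubic c (imvec z) < 0 /\ signature (hessian c (imvec z)) h.-1 1).
Proof.
rewrite (HR_reduce c_real z).
change (cubic c (imvec z)) with (phi c z).
have Sn_of : phi c z < 0 -> Sd e eta < 0.
  by rewrite phiE SdE pmulr_llt0 // invr_gt0 ltr0n.
have er := dg_real Areal Asym.
split => [[pn Q] | [pn Sg]]; split => //.
  have Sn := Sn_of pn.
  apply/(sig_counts Areal Asym); apply/(core er Sn) => w wnz.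
  have := Q (Pi A w) (Pi0 wnz).
  rewrite !DyE HqE FdE BdE phiE SdE.
  by have -> : Pv A (Pi A w) = w by apply: functional_extensionality => k; exact: Pv_Pi.
have Sn := Sn_of pn.
move=> a anz.
have := (proj2 (core er Sn)) ((sig_counts Areal Asym _ _).1 Sg) (Pv A a) (Pv0 anz).
by rewrite !DyE HqE FdE BdE phiE SdE.
Qed.

End Main.

Theorem mainTheorem14 (C : numClosedFieldType) (h : nat)
  (c : 'I_h -> 'I_h -> 'I_h -> C)
  (c_real : forall i j k, c i j k \is Num.real) (z : 'rV[C]_h) :
  HodgeRiemann c z <->
  (cubic c (imvec z) < 0 /\ signature (hessian c (imvec z)) h.-1 1).
Proof. exact: (main_iff c_real z). Qed.
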